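(* Let $H$ be a finite abelian group of odd order $d$, where $d$ has no divisor congruent to $3\bmod 4$, and let $\lambda:H\times H\to\mathbb{Q}/\mathbb{Z}$ be a non-degenerate symmetric bilinear form. Let $\Lambda_0=\{g\in H:\lambda(g,g)=0\}$. Then $\Lambda_0=\{0\}$ if and only if $H\cong\mathbb{Z}_{q'}\oplus\mathbb{Z}_q$, where $q'$ is a product of distinct primes $p_i\equiv 1\pmod 4$ and $q\mid q'$, and for each prime $p_i\mid q$ there is a basis $(g_1,g_2)$ of the $p_i$-Sylow subgroup $\mathbb{Z}_{p_i}\oplus\mathbb{Z}_{p_i}$ of $H$ such that, identifying $\frac1{p_i}\mathbb{Z}/\mathbb{Z}\subset\mathbb{Q}/\mathbb{Z}$ with $\mathbb{Z}_{p_i}$, one has $\lambda(e_1g_1+e_2g_2,\,e_1g_1+e_2g_2)=e_1^2+\beta e_2^2$ for all $e_1,e_2\in\mathbb{Z}$, where $\beta$ is not a quadratic residue modulo $p_i$.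
   Context: $\mathbb{Z}_n=\mathbb{Z}/n\mathbb{Z}$. The $p$-Sylow subgroup of a finite abelian group is its subgroup of elements of $p$-power order. *)

(* Defs.v *)
From HB Require Import structures.
From mathcomp Require Import all_boot all_order all_algebra all_fingroup all_solvable.
Set Implicit Arguments. Unset Strict Implicit. Unset Printing Implicit Defensive.
Import GRing.Theory Num.Theory.

(* Q/Z is represented by rationals modulo integers: a map into Q/Z is given
   by a rational-valued lift, and two lifts define the same element of Q/Z
   iff their difference is an integer. *)
Definition eqQZ (a b : rat) : bool := ((a - b)%R \is a Num.int).

Local Open Scope group_scope.

Definition symmetric_bilinear_QZ (gT : finGroupType) (H : {set gT})
  (lam : gT -> gT -> rat) : Prop :=
  [/\ {in H & H, forall x y, eqQZ (lam x y) (lam y x)},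
      {in H & H, forall x y, {in H, forall z, eqQZ (lam (x * y) z) (lam x z + lam y z)%R}} &
      {in H & H, forall x y, {in H, forall z, eqQZ (lam z (x * y)) (lam z x + lam z y)%R}}].

Definition nondegenerate_QZ (gT : finGroupType) (H : {set gT})
  (lam : gT -> gT -> rat) : Prop :=
  {in H, forall g, {in H, forall h, eqQZ (lam g h) 0} -> g = 1}.

Definition Lambda0 (gT : finGroupType) (H : {set gT}) (lam : gT -> gT -> rat)
  : {set gT} := [set g in H | eqQZ (lam g g) 0].

(* the cyclic group Z_n = Z/nZ, for n >= 1 (as the additive group 'I_n) *)
Definition Zmod (n : nat) : finGroupType := 'I_n.-1.+1.

Definition prod_distinct_primes_1mod4 (n : nat) : Prop :=
  exists s : seq nat, [/\ uniq s, all prime s, all (fun p => p %% 4 == 1)%N s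
                        & n = \prod_(p <- s) p]%N.

(* Main.v *)
Require Import Defs.
From HB Require Import structures.
From mathcomp Require Import all_boot all_order all_algebra all_fingroup all_solvable all_field.
From mathcomp Require Import ring zify.
Import GRing.Theory Num.Theory.
Set Implicit Arguments. Unset Strict Implicit. Unset Printing Implicit Defensive.

Local Open Scope ring_scope.

Lemma eqQZ_refl a : eqQZ a a.
Proof. by rewrite /eqQZ subrr rpred0. Qed.

Lemma eqQZ_sym a b : eqQZ a b -> eqQZ b a.
Proof. by rewrite /eqQZ => h; rewrite -opprB rpredN. Qed.

Lemma eqQZ_trans a b c : eqQZ a b -> eqQZ b c -> eqQZ a c.
Proof.
by rewrite /eqQZ => h1 h2; have := rpredD h1 h2; rewrite addrA subrK.
Qed.

Lemma eqQZ_add a b c d : eqQZ a b -> eqQZ c d -> eqQZ (a + c) (b + d).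
Proof.
rewrite /eqQZ => h1 h2; have := rpredD h1 h2.
by rewrite opprD addrACA.
Qed.

Lemma eqQZ_mulz (z : int) a b : eqQZ a b -> eqQZ (z%:~R * a) (z%:~R * b).
Proof.
rewrite /eqQZ => h; rewrite -mulrBr mulrC mulrzr; exact: rpredMz.
Qed.

Lemma eqQZ_muln (n : nat) a b : eqQZ a b -> eqQZ (n%:R * a) (n%:R * b).
Proof. by move=> h; have := eqQZ_mulz n h. Qed.

Lemma eqQZ_int0 (z : int) : eqQZ z%:~R 0.
Proof. by rewrite /eqQZ subr0 intr_int. Qed.

Lemma eqQZ_sub a b : eqQZ a b = eqQZ (a - b) 0.
Proof. by rewrite /eqQZ subr0. Qed.

Lemma divp_int (p : nat) (z : int) : (0 < p)%N ->
  ((z%:~R / p%:R : rat) \is a Num.int) = (p%:Z %| z)%Z.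
Proof.
move=> p0; apply/idP/idP; last first.
  by move=> h; have := Qint_dvdz h.
move=> /floorK h; set w := Num.floor _ in h.
have : z%:~R = (w * p%:Z)%:~R :> rat.
  by rewrite intrM h mulfVK // pnatr_eq0 -lt0n.
by move/intr_inj => ->; rewrite dvdz_mull.
Qed.

Lemma Fp_int0 (p : nat) (z : int) : prime p ->
  ((z%:~R : 'F_p) == 0) = (p%:Z %| z)%Z.
Proof.
move=> pp; have chp := pchar_Fp pp.
case: z => n.
  by rewrite -pmulrn -(dvdn_pcharf chp).
rewrite NegzE mulrNz oppr_eq0 -pmulrn -(dvdn_pcharf chp).
by rewrite rpredN.
Qed.

Definition cF (p : nat) (r : rat) : 'F_p := (Num.floor (p%:R * r))%:~R.
Definition pint (p : nat) (r : rat) := (p%:R * r) \is a Num.int.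

Lemma cF_eq p r s : prime p -> pint p r -> pint p s -> eqQZ r s <-> cF p r = cF p s.
Proof.
move=> pp /floorK hr /floorK hs; rewrite /cF.
have p0 : (p%:R : rat) != 0 by rewrite pnatr_eq0 -lt0n prime_gt0.
have -> : eqQZ r s = (((Num.floor (p%:R * r) - Num.floor (p%:R * s))%:~R / p%:R : rat) \is a Num.int).
  by rewrite /eqQZ intrB hr hs -mulrBr mulrC mulKf.
rewrite divp_int ?prime_gt0 // -Fp_int0 // intrB subr_eq0.
by split => [/eqP|->].
Qed.

Lemma pintD p r s : pint p r -> pint p s -> pint p (r + s).
Proof. by rewrite /pint mulrDr; apply: rpredD. Qed.

Lemma pint_int p (z : int) : (0 < p)%N -> pint p (z%:~R / p%:R).
Proof.
move=> p0; rewrite /pint mulrC mulfVK ?intr_int // pnatr_eq0 -lt0n //.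
Qed.

Lemma cF_add p r s : pint p r -> pint p s -> cF p (r + s) = cF p r + cF p s.
Proof.
move=> hr hs; rewrite /cF mulrDr floorDzr // -intrD //.
Qed.

Lemma cF_int p (z : int) : (0 < p)%N -> cF p (z%:~R / p%:R) = z%:~R.
Proof.
move=> p0; rewrite /cF mulrC mulfVK ?pnatr_eq0 -?lt0n //.
by rewrite (intrKfloor).
Qed.

Lemma cF0 p : cF p 0 = 0.
Proof. by rewrite /cF mulr0 floor0. Qed.

Section Form.
Variables (gT : finGroupType) (H : {group gT}) (lam : gT -> gT -> rat).
Hypothesis hsb : symmetric_bilinear_QZ H lam.

Lemma lam_sym x y : x \in H -> y \in H -> eqQZ (lam x y) (lam y x).
Proof. by case: hsb => h _ _; apply: h. Qed.

Lemma lamMl x y z : x \in H -> y \in H -> z \in H ->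
  eqQZ (lam (x * y)%g z) (lam x z + lam y z).
Proof. by case: hsb => _ h _ Hx Hy Hz; apply: h. Qed.

Lemma lamMr x y z : x \in H -> y \in H -> z \in H ->
  eqQZ (lam z (x * y)%g) (lam z x + lam z y).
Proof. by case: hsb => _ _ h Hx Hy Hz; apply: h. Qed.

Lemma lam1l y : y \in H -> eqQZ (lam 1%g y) 0.
Proof.
move=> Hy; have := lamMl (group1 H) (group1 H) Hy; rewrite mulg1.
rewrite /eqQZ => h.
have e : - lam 1%g y = lam 1%g y - (lam 1%g y + lam 1%g y) by ring.
by rewrite subr0 -rpredN e.
Qed.

Lemma lam1r y : y \in H -> eqQZ (lam y 1%g) 0.
Proof.
move=> Hy; apply: eqQZ_trans (lam_sym Hy (group1 H)) (lam1l Hy).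
Qed.

Lemma lamXl x y n : x \in H -> y \in H -> eqQZ (lam (x ^+ n)%g y) (n%:R * lam x y).
Proof.
move=> Hx Hy; elim: n => [|n IH]; first by rewrite expg0 mul0r lam1l.
rewrite expgS; apply: eqQZ_trans (lamMl Hx (groupX n Hx) Hy) _.
rewrite mulrSr mulrDl mul1r addrC; apply: eqQZ_add => //; exact: eqQZ_refl.
Qed.

Lemma lamXr x y n : x \in H -> y \in H -> eqQZ (lam y (x ^+ n)%g) (n%:R * lam y x).
Proof.
move=> Hx Hy; apply: eqQZ_trans (lam_sym Hy (groupX n Hx)) _.
apply: eqQZ_trans (lamXl n Hx Hy) _; apply: eqQZ_muln.
exact: lam_sym.
Qed.

Lemma lam_ord x y n : x \in H -> y \in H -> (x ^+ n = 1)%g -> eqQZ (n%:R * lam x y) 0.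
Proof.
move=> Hx Hy hn; apply: eqQZ_trans (eqQZ_sym (lamXl n Hx Hy)) _.
by rewrite hn lam1l.
Qed.

Lemma lam_ord_r x y n : x \in H -> y \in H -> (x ^+ n = 1)%g -> eqQZ (n%:R * lam y x) 0.
Proof.
move=> Hx Hy hn; apply: eqQZ_trans (eqQZ_sym (lamXr n Hx Hy)) _.
by rewrite hn lam1r.
Qed.

Lemma pint_lam p x y : x \in H -> y \in H -> (x ^+ p = 1)%g -> pint p (lam x y).
Proof. by move=> Hx Hy hp; have := lam_ord Hx Hy hp; rewrite /eqQZ subr0. Qed.

Lemma pint_lam_r p x y : x \in H -> y \in H -> (x ^+ p = 1)%g -> pint p (lam y x).
Proof. by move=> Hx Hy hp; have := lam_ord_r Hx Hy hp; rewrite /eqQZ subr0. Qed.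

Lemma lamQ_M x y : x \in H -> y \in H ->
  eqQZ (lam (x * y)%g (x * y)%g) (lam x x + lam y y + 2%:R * lam x y).
Proof.
move=> Hx Hy; have Hxy := groupM Hx Hy.
apply: eqQZ_trans (lamMl Hx Hy Hxy) _.
apply: eqQZ_trans (eqQZ_add (lamMr Hx Hy Hx) (lamMr Hx Hy Hy)) _.
have : eqQZ (lam y x) (lam x y) by apply: lam_sym.
move=> h; have := eqQZ_add (eqQZ_refl (lam x x + lam y y + lam x y)) h.
rewrite /eqQZ => h2; rewrite /eqQZ.
have -> : lam x x + lam x y + (lam y x + lam y y) - (lam x x + lam y y + 2%:R * lam x y) = 
    lam x x + lam y y + lam x y + lam y x - (lam x x + lam y y + lam x y + lam x y) by ring.
by [].
Qed.

End Form.

Lemma Fp_natK (p : nat) (x : 'F_p) : prime p -> ((val x)%:R : 'F_p) = x.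
Proof.
move=> pp; apply: val_inj => /=; rewrite val_Fp_nat // modn_small //.
by have := ltn_ord x; rewrite -[X in (_ < X)%N]card_ord card_Fp.
Qed.

Lemma sq_count (p : nat) (a b c : 'F_p) : prime p -> odd p -> a != 0 -> b != 0 ->
  exists x y : 'F_p, a * x ^+ 2 + b * y ^+ 2 = c.
Proof.
move=> pp op a0 b0.
have [h2 hp] : exists h2, p = (h2 + h2).+1.
  by exists p./2; rewrite addnn -{1}(odd_double_half p) op.
have mp : (h2.+1 <= p)%N by clear -hp; lia.
have sqinj : forall k l : 'I_h2.+1, (k%:R : 'F_p) ^+ 2 = (l%:R) ^+ 2 -> k = l.
  move=> k l /eqP; rewrite -subr_eq0 subr_sqr mulf_eq0 => /orP [].
    rewrite subr_eq0 => /eqP /(congr1 (fun z : 'F_p => nat_of_ord z)) /=; rewrite !val_Fp_nat // => e.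
    apply: val_inj; move: e; rewrite !modn_small //.
      exact: leq_trans (ltn_ord l) mp.
    exact: leq_trans (ltn_ord k) mp.
  rewrite -natrD -(dvdn_pcharf (pchar_Fp pp)) => /dvdn_leq.
  have hk := ltn_ord k; have hl := ltn_ord l; 
  case: (posnP (k + l)) => [e _ | kl0 /(_ isT) ].
    by apply: val_inj => /=; clear -e; lia.
  move=> h; exfalso; clear -hk hl hp h; lia.
pose f := fun k : 'I_h2.+1 => a * (k%:R : 'F_p) ^+ 2.
pose g := fun k : 'I_h2.+1 => c - b * (k%:R : 'F_p) ^+ 2.
have finj : injective f.
  by move=> k l; rewrite /f => /(mulfI a0) /sqinj.
have ginj : injective g.
  move=> k l; rewrite /g => /eqP; rewrite (inj_eq (addrI c)) (inj_eq oppr_inj).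
  by move=> /eqP /(mulfI b0) /sqinj.
have cS : #|[set f k | k in 'I_h2.+1]| = h2.+1 by rewrite card_imset // card_ord.
have cT : #|[set g k | k in 'I_h2.+1]| = h2.+1 by rewrite card_imset // card_ord.
have := cardsUI [set f k | k in 'I_h2.+1] [set g k | k in 'I_h2.+1].
rewrite cS cT => e.
have hU : (#|[set f k | k in 'I_h2.+1] :|: [set g k | k in 'I_h2.+1]| <= p)%N.
  by apply: leq_trans (max_card _) _; rewrite card_Fp.
have : (0 < #|[set f k | k in 'I_h2.+1] :&: [set g k | k in 'I_h2.+1]|)%N.
  clear -e hU hp. lia.
rewrite card_gt0 => /set0Pn [z]; rewrite inE => /andP [/imsetP [k _ ->] /imsetP [l _]].
rewrite /f /g => e2; exists (k%:R), (l%:R).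
by rewrite e2 subrK.
Qed.

Lemma sqrtm1 (p : nat) : prime p -> (p %% 4 = 1)%N -> exists i : 'F_p, i ^+ 2 = -1.
Proof.
move=> pp p4.
have cG := field_unit_group_cyclic [set: {unit 'F_p}]%G.
have [g eG] := cyclicP cG.
have og : #[g]%g = p.-1.
  by rewrite /order -eG card_finField_unit card_Fp.
have [k ek] : exists k, p.-1 = (4 * k)%N.
  exists (p %/ 4)%N; have := divn_eq p 4; rewrite p4; lia.
have k0 : (0 < k)%N by have := prime_gt1 pp; lia.
have ou : #[(g ^+ k)%g]%g = 4%N.
  rewrite orderXdiv og ek ?dvdn_mull // mulnK //.
exists (FinRing.uval (g ^+ k)%g).
have e4 : (FinRing.uval (g ^+ k)%g) ^+ 2 ^+ 2 = 1.
  rewrite -exprM -FinRing.val_unitX.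
  have : ((g ^+ k) ^+ (2 * 2)%N)%g = 1%g by apply/eqP; rewrite -order_dvdn ou.
  by move->.
have := e4; move/eqP; rewrite sqrf_eq1 => /orP [/eqP e1|/eqP //].
exfalso.
have : ((g ^+ k) ^+ 2)%g = 1%g.
  by apply: val_inj; rewrite FinRing.val_unitX e1.
by move/eqP; rewrite -order_dvdn ou.
Qed.

Section FpForm.
Variables (gT : finGroupType) (H : {group gT}) (lam : gT -> gT -> rat).
Hypothesis hsb : symmetric_bilinear_QZ H lam.
Hypothesis cHH : abelian H.
Variables (p : nat) (E : {group gT}).
Hypothesis pp : prime p.
Hypothesis sEH : E \subset H.
Hypothesis expE : forall x, x \in E -> (x ^+ p = 1)%g.

Definition Bf x y : 'F_p := cF p (lam x y).

Let inH x : x \in E -> x \in H.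
Proof. by move/(subsetP sEH). Qed.

Lemma Bsym x y : x \in E -> y \in E -> Bf x y = Bf y x.
Proof.
move=> Ex Ey; apply/(cF_eq pp).
- exact: pint_lam (inH Ex) (inH Ey) (expE Ex).
- exact: pint_lam (inH Ey) (inH Ex) (expE Ey).
exact: lam_sym (inH Ex) (inH Ey).
Qed.

Lemma BMl x y z : x \in E -> y \in E -> z \in E -> Bf (x * y)%g z = Bf x z + Bf y z.
Proof.
move=> Ex Ey Ez; rewrite /Bf -cF_add.
- apply/(cF_eq pp).
  + exact: pint_lam_r (inH Ez) (groupM (inH Ex) (inH Ey)) (expE Ez).
  + apply: pintD; [exact: pint_lam_r (inH Ez) (inH Ex) (expE Ez) | exact: pint_lam_r (inH Ez) (inH Ey) (expE Ez)].
  exact: lamMl (inH Ex) (inH Ey) (inH Ez).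
- exact: pint_lam_r (inH Ez) (inH Ex) (expE Ez).
exact: pint_lam_r (inH Ez) (inH Ey) (expE Ez).
Qed.

Lemma BMr x y z : x \in E -> y \in E -> z \in E -> Bf z (x * y)%g = Bf z x + Bf z y.
Proof.
move=> Ex Ey Ez; rewrite Bsym ?groupM // BMl // (Bsym Ex) // (Bsym Ey) //.
Qed.

Lemma B1l z : z \in E -> Bf 1%g z = 0.
Proof.
move=> Ez; have := BMl (group1 E) (group1 E) Ez; rewrite mulg1 => e.
by apply: (addrI (Bf 1%g z)); rewrite addr0 -e.
Qed.

Lemma BXl x z n : x \in E -> z \in E -> Bf (x ^+ n)%g z = n%:R * Bf x z.
Proof.
move=> Ex Ez; elim: n => [|n IH]; first by rewrite expg0 B1l // mul0r.
by rewrite expgS BMl ?groupX // IH mulrSr mulrDl mul1r addrC.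
Qed.

Lemma BXr x z n : x \in E -> z \in E -> Bf z (x ^+ n)%g = n%:R * Bf z x.
Proof.
by move=> Ex Ez; rewrite Bsym ?groupX // BXl // Bsym.
Qed.

Lemma Bzero x y : x \in E -> y \in E -> eqQZ (lam x y) 0 <-> Bf x y = 0.
Proof.
move=> Ex Ey; rewrite -(cF0 p); apply: (cF_eq pp).
- exact: pint_lam (inH Ex) (inH Ey) (expE Ex).
by rewrite /pint mulr0 rpred0.
Qed.

Lemma BQM x y : x \in E -> y \in E ->
  Bf (x * y)%g (x * y)%g = Bf x x + Bf y y + 2%:R * Bf x y.
Proof.
move=> Ex Ey; rewrite BMl ?groupM // !BMr // (Bsym Ey Ex).
rewrite mulr2n mulrDl mul1r; ring.
Qed.

Lemma BQX x n : x \in E -> Bf (x ^+ n)%g (x ^+ n)%g = (n%:R ^+ 2) * Bf x x.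
Proof.
by move=> Ex; rewrite BXl ?groupX // BXr // mulrA expr2.
Qed.

Lemma ordE x : x \in E -> x != 1%g -> #[x]%g = p.
Proof.
move=> Ex x1; apply/(prime_nt_dvdP pp); first by rewrite order_eq1.
by rewrite order_dvdn expE.
Qed.

Lemma cyc_gen x g : g \in E -> x \in <[g]>%g -> x != 1%g -> g \in <[x]>%g.
Proof.
move=> Eg xg x1.
have sgE : <[g]>%g \subset E by rewrite cycle_subG.
have Ex := subsetP sgE x xg.
have g1 : g != 1%g by apply: contraNneq x1 => g1; move: xg; rewrite g1 cycle1 inE.
have : <[x]>%g == <[g]>%g.
  rewrite eqEcard cycle_subG xg /= -!orderE ordE // ordE //.
by move/eqP ->; apply: cycle_id.
Qed.

Lemma ortho1 u w : u \in E -> w \in E -> Bf u u != 0 ->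
  exists t : nat, Bf u (u ^+ t * w)%g = 0.
Proof.
move=> Eu Ew a0; exists (val (- Bf u w / Bf u u)).
by rewrite BMr ?groupX // BXr // Fp_natK // divfK // addNr.
Qed.


Lemma ortho2 u v w : u \in E -> v \in E -> w \in E -> Bf u u != 0 -> Bf v v != 0 ->
  Bf u v = 0 ->
  exists s r : nat, Bf u (u ^+ s * v ^+ r * w)%g = 0 /\ Bf v (u ^+ s * v ^+ r * w)%g = 0.
Proof.
move=> Eu Ev Ew a0 b0 uv.
exists (val (- Bf u w / Bf u u)), (val (- Bf v w / Bf v v)).
rewrite !BMr ?groupM ?groupX // !BXr // !Fp_natK // uv (Bsym Ev Eu) uv.
by rewrite !divfK // !mulr0 !addr0 add0r !addNr.
Qed.

Lemma anisE (aniso : forall x, x \in E -> Bf x x = 0 -> x = 1%g) x :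
  x \in E -> x != 1%g -> Bf x x != 0.
Proof. by move=> Ex; apply: contra_neq; exact: aniso Ex. Qed.

Lemma cent_cyc u v : u \in E -> v \in E -> (<[v]> \subset 'C(<[u]>))%g.
Proof.
move=> Eu Ev; have cEE := abelianS sEH cHH.
have sv : <[v]>%g \subset E by rewrite cycle_subG.
have su : <[u]>%g \subset E by rewrite cycle_subG.
exact: subset_trans sv (sub_abelian_cent cEE su).
Qed.

Lemma exists_nontriv : (1 < #|E|)%N -> exists2 u, u \in E & u != 1%g.
Proof.
move=> h; apply/trivgPn; apply: contraTneq h => ->.
by rewrite cards1.
Qed.

Lemma exists_out (K : {group gT}) : (#|K| < #|E|)%N -> exists2 w, w \in E & w \notin K.
Proof.
move=> h; apply/subsetPn; apply: contraTN h => sE; rewrite -leqNgt.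
exact: subset_leq_card sE.
Qed.

Lemma no_ternary : odd p -> (p ^ 3 <= #|E|)%N ->
  (forall x, x \in E -> Bf x x = 0 -> x = 1%g) -> False.
Proof.
move=> op cE aniso.
have anis := anisE aniso.
have p1 : (1 < p)%N := prime_gt1 pp.
have cEgt : (p ^ 2 < #|E|)%N by apply: leq_trans cE; rewrite ltn_exp2l.
have [u Eu u1] : exists2 u, u \in E & u != 1%g.
  apply: exists_nontriv; apply: leq_ltn_trans cEgt.
  by rewrite expn_gt0 prime_gt0.
have ou := ordE Eu u1.
have [w Ew wu] : exists2 w, w \in E & w \notin <[u]>%g.
  apply: exists_out; apply: leq_ltn_trans cEgt.
  by rewrite -orderE ou -{1}(expn1 p) leq_exp2l.
have [t vt] := ortho1 Eu Ew (anis u Eu u1).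
set v := (u ^+ t * w)%g in vt.
have Ev : v \in E by rewrite groupM ?groupX.
have vu : v \notin <[u]>%g by rewrite groupMl ?mem_cycle.
have v1 : v != 1%g by apply: contraNneq vu => ->; rewrite group1.
have ov := ordE Ev v1.
clearbody v.
pose K := (<[u]> <*> <[v]>)%G.
have eK : K :=: (<[u]> * <[v]>)%g := cent_joinEr (cent_cyc Eu Ev).
have cK : (#|K| <= p ^ 2)%N.
  rewrite eK; have := mul_cardG <[u]>%G <[v]>%G; rewrite -!orderE ou ov => e.
  have := cardG_gt0 (<[u]> :&: <[v]>)%G => h.
  by rewrite expnS expn1 e leq_pmulr.
have [w' Ew' wK] : exists2 w', w' \in E & w' \notin K.
  by apply: exists_out; apply: leq_ltn_trans cK cEgt.
have [s [r [hs hr]]] := ortho2 Eu Ev Ew' (anis u Eu u1) (anis v Ev v1) vt.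
set z := (u ^+ s * v ^+ r * w')%g in hs hr.
have Kuv i j : (u ^+ i * v ^+ j)%g \in K by rewrite eK mem_mulg ?mem_cycle.
have Ez : z \in E by rewrite !groupM ?groupX.
have zK : z \notin K by rewrite /z groupMl ?Kuv.
have z1 : z != 1%g by apply: contraNneq zK => ->; rewrite group1.
clearbody z.
have [X [Y eXY]] := sq_count (- Bf z z) pp op (anis u Eu u1) (anis v Ev v1).
have Eg : (u ^+ (val X) * v ^+ (val Y) * z)%g \in E by rewrite !groupM ?groupX.
have : Bf (u ^+ (val X) * v ^+ (val Y) * z)%g (u ^+ (val X) * v ^+ (val Y) * z)%g = 0.
  rewrite BQM ?groupM ?groupX // BQM ?groupX // !BQX // BMl ?groupX //.
  rewrite !BXl ?groupX // BXr // !Fp_natK // vt hs hr.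
  rewrite -[Bf z z]opprK -eXY; ring.
move/(aniso _ Eg)/eqP; rewrite -eq_invg_mul => /eqP ez.
by move: zK; rewrite -ez groupV Kuv.
Qed.

Lemma binary : odd p -> (p %% 4 = 1)%N -> #|E| = (p ^ 2)%N ->
  (forall x, x \in E -> Bf x x = 0 -> x = 1%g) ->
  exists (g1 g2 : gT) (beta : int),
    [/\ (#[g1] = p)%g, (#[g2] = p)%g, (<[g1]> \x <[g2]> = E)%g,
        (forall x : int, ~~ (p%:Z %| (x ^+ 2 - beta)%R)%Z) &
        forall e1 e2 : nat,
          eqQZ (lam (g1 ^+ e1 * g2 ^+ e2)%g (g1 ^+ e1 * g2 ^+ e2)%g)
               (((e1 ^ 2)%:Z + beta * (e2 ^ 2)%:Z)%:~R / p%:R)%R].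
Proof.
move=> op p4 cE aniso.
have anis := anisE aniso.
have p1 : (1 < p)%N := prime_gt1 pp.
have cEgt : (p < #|E|)%N by rewrite cE -{1}(expn1 p) ltn_exp2l.
have [u Eu u1] : exists2 u, u \in E & u != 1%g.
  by apply: exists_nontriv; apply: ltn_trans p1 cEgt.
have ou := ordE Eu u1.
have [w Ew wu] : exists2 w, w \in E & w \notin <[u]>%g.
  by apply: exists_out; rewrite -orderE ou.
have [t vt] := ortho1 Eu Ew (anis u Eu u1).
set v := (u ^+ t * w)%g in vt.
have Ev : v \in E by rewrite groupM ?groupX.
have v1 : v != 1%g.
  apply: contraNneq wu => ev; have : (u ^+ t * w)%g \in <[u]>%g by rewrite -/v ev group1.
  by rewrite groupMl ?mem_cycle.
clearbody v.
have [X [Y eXY]] := sq_count 1 pp op (anis u Eu u1) (anis v Ev v1).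
set g1 := (u ^+ (val X) * v ^+ (val Y))%g.
have Eg1 : g1 \in E by rewrite groupM ?groupX.
have Bg1 : Bf g1 g1 = 1.
  rewrite /g1 BQM ?groupX // !BQX // BXl ?groupX // BXr // !Fp_natK // vt.
  by rewrite -eXY; ring.
clearbody g1.
have g11 : g1 != 1%g.
  by apply: contra_eqN Bg1 => /eqP ->; rewrite B1l // eq_sym oner_eq0.
have og1 := ordE Eg1 g11.
have [w2 Ew2 w2u] : exists2 w, w \in E & w \notin <[g1]>%g.
  by apply: exists_out; rewrite -orderE og1.
have [t2 vt2] := ortho1 Eg1 Ew2 (anis g1 Eg1 g11).
set g2 := (g1 ^+ t2 * w2)%g in vt2.
have Eg2 : g2 \in E by rewrite groupM ?groupX.
have g2u : g2 \notin <[g1]>%g by rewrite groupMl ?mem_cycle.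
have g21 : g2 != 1%g by apply: contraNneq g2u => ->; rewrite group1.
have og2 := ordE Eg2 g21.
clearbody g2.
set b2 := Bf g2 g2.
have Bgen e1 e2 : Bf (g1 ^+ e1 * g2 ^+ e2)%g (g1 ^+ e1 * g2 ^+ e2)%g
    = (e1%:R) ^+ 2 + (e2%:R) ^+ 2 * b2.
  rewrite BQM ?groupX // !BQX // BXl ?groupX // BXr // vt2 Bg1.
  by rewrite /b2; ring.
exists g1, g2, (Posz (val b2)); split => //.
- have TI : (<[g1]> :&: <[g2]> = 1)%g.
    apply/trivgP/subsetP => x /setIP [x1 x2]; rewrite inE.
    apply/negPn/negP => nx.
    have := cyc_gen Eg2 x2 nx.
    have : (<[x]> \subset <[g1]>)%g by rewrite cycle_subG.
    by move/subsetP => h /h; apply/negP.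
  rewrite dprodE ?cent_cyc //; apply/eqP.
  rewrite eqEcard mul_subG ?cycle_subG //= TI_cardMg // -!orderE og1 og2 cE.
  by rewrite expnS expn1.
- move=> x; apply/negP => hx.
  have [i hi] := sqrtm1 pp p4.
  have : ((x ^+ 2 - Posz (val b2))%:~R : 'F_p) == 0 by rewrite Fp_int0.
  rewrite intrB rmorphXn -pmulrn Fp_natK // subr_eq0 => /eqP ex.
  set e1 := val (i * x%:~R : 'F_p).
  have Eg : (g1 ^+ e1 * g2 ^+ 1)%g \in E by rewrite groupM ?groupX.
  have : Bf (g1 ^+ e1 * g2 ^+ 1)%g (g1 ^+ e1 * g2 ^+ 1)%g = 0.
    rewrite Bgen /e1 Fp_natK // exprMn hi -ex; ring.
  move/(aniso _ Eg)/eqP; rewrite -eq_invg_mul expg1 => /eqP eg.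
  by move: g2u; rewrite -eg groupV mem_cycle.
move=> e1 e2; have Eg : (g1 ^+ e1 * g2 ^+ e2)%g \in E by rewrite groupM ?groupX.
apply/(cF_eq pp).
- exact: pint_lam (inH Eg) (inH Eg) (expE Eg).
- by apply: pint_int; rewrite prime_gt0.
rewrite cF_int ?prime_gt0 //; rewrite -/(Bf _ _) Bgen.
by rewrite intrD intrM -!pmulrn Fp_natK // !natrX; ring.
Qed.

End FpForm.

Lemma prod_primes_gt0 (s : seq nat) : all prime s -> (0 < \prod_(r <- s) r)%N.
Proof.
elim: s => [|a s IH]; first by rewrite big_nil.
by rewrite big_cons /= => /andP [pa /IH h]; rewrite muln_gt0 prime_gt0.
Qed.

Lemma prime_dvd_prod (s : seq nat) r : all prime s -> prime r ->
  (r %| \prod_(x <- s) x)%N -> r \in s.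
Proof.
move=> + pr; elim: s => [|a s IH]; first by rewrite big_nil dvdn1 => _ /eqP e; rewrite e in pr.
rewrite big_cons /= => /andP [pa ps]; rewrite Euclid_dvdM // inE => /orP [].
  by rewrite dvdn_prime2 // => ->.
by move/(IH ps) ->; rewrite orbT.
Qed.

Lemma prod_sqf (s : seq nat) r : uniq s -> all prime s -> prime r ->
  ~~ (r ^ 2 %| \prod_(x <- s) x)%N.
Proof.
move=> + + pr; elim: s => [|a s IH].
  rewrite big_nil dvdn1 => _ _; apply/negP => /eqP h.
  have := prime_gt1 pr; have : (r ^ 1 <= r ^ 2)%N by rewrite leq_exp2l ?prime_gt1.
  by rewrite expn1 h; lia.
rewrite big_cons /= => /andP [ans us] /andP [pa ps].
apply/negP => h.
have [ra | rna] := eqVneq r a.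
  move: h; rewrite ra expnS expn1 dvdn_pmul2l ?prime_gt0 // => /(prime_dvd_prod ps pa).
  by move=> ain; rewrite ain in ans.
have : coprime (r ^ 2) a.
  by rewrite coprime_pexpl // prime_coprime // dvdn_prime2 //.
move=> cop; move: h; rewrite Gauss_dvdr //.
by apply/negP; apply: IH.
Qed.

Lemma sqf_prod (n : nat) : (0 < n)%N -> (forall r, prime r -> ~~ (r ^ 2 %| n)%N) ->
  n = (\prod_(r <- primes n) r)%N.
Proof.
move=> n0 sq; rewrite {1}(prod_prime_decomp n0) prime_decompE big_map /=.
apply: eq_big_seq => r; rewrite mem_primes => /and3P [pr _ rn].
have : (1 <= logn r n)%N by rewrite -pfactor_dvdn // expn1.
have : ~~ (2 <= logn r n)%N by rewrite -pfactor_dvdn // sq.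
move=> h1 h2; have -> : logn r n = 1%N by lia.
by rewrite expn1.
Qed.

Lemma logn1 r n : prime r -> (0 < n)%N -> (r %| n)%N -> ~~ (r ^ 2 %| n)%N -> logn r n = 1%N.
Proof.
move=> pr n0 rn sq.
have : (1 <= logn r n)%N by rewrite -pfactor_dvdn // expn1.
have : ~~ (2 <= logn r n)%N by rewrite -pfactor_dvdn.
lia.
Qed.

Lemma odd_dvd d r : odd d -> (r %| d)%N -> odd r.
Proof.
move=> od rd; apply/negPn/negP; rewrite -dvdn2 => h.
by move: od; rewrite -[odd d]negbK -dvdn2 (dvdn_trans h rd).
Qed.

Lemma mod4 r : odd r -> (r %% 4 != 3)%N -> (r %% 4 = 1)%N.
Proof.
move=> or r3; have h := modn2 r; rewrite or in h.
have : (r %% 2 = (r %% 4) %% 2)%N by rewrite modn_dvdm.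
move: r3; have := ltn_pmod r (isT : (0 < 4)%N); lia.
Qed.

Lemma coprime_QZ (m r : nat) (c : rat) : coprime m r ->
  eqQZ (m%:R * c) 0 -> eqQZ (r%:R * c) 0 -> eqQZ c 0.
Proof.
move=> cop; rewrite /eqQZ !subr0 => hm hr.
have [u [v e]] := Bezoutz m r.
have g1 : gcdz m r = 1 by rewrite /gcdz /= (eqP cop).
rewrite g1 in e.
have -> : c = u%:~R * (m%:R * c) + v%:~R * (r%:R * c).
  rewrite !mulrA -mulrDl.
  have -> : (u%:~R * m%:R + v%:~R * r%:R : rat) = ((u * m%:Z + v * r%:Z)%R)%:~R.
    by rewrite intrD !intrM -!pmulrn.
  by rewrite e mul1r.
by apply: rpredD; rewrite mulrC mulrzr; apply: rpredMz.
Qed.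

Lemma setT_Zmod_prod (m n : nat) :
  [set: (Zmod m * Zmod n)%type] = setX [set: Zmod m] [set: Zmod n].
Proof. by apply/setP => -[a b]; rewrite !inE. Qed.

Lemma cyc_isog_Zmod (gT : finGroupType) (x : gT) : (<[x]> \isog [set: Zmod #[x]%g])%g.
Proof.
rewrite isog_cyclic_card ?cycle_cyclic //; apply/andP; split.
  by apply/cyclicP; exists (Zp1 : 'I_(#[x]%g.-1).+1); exact: (Zp_cycle (#[x]%g.-1)).
by rewrite cardsT card_ord prednK ?order_gt0 // -orderE.
Qed.

Lemma iso_Zmod (gT : finGroupType) (H : {group gT}) (x y : gT) :
  (<[x]> \x <[y]> = H)%g -> (H \isog [set: (Zmod #[x]%g * Zmod #[y]%g)%type])%g.
Proof.
move=> dxy; rewrite setT_Zmod_prod.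
apply: isog_dprod dxy (setX_dprod [set: Zmod #[x]%g]%G [set: Zmod #[y]%g]%G) _ _.
  exact: isog_trans (cyc_isog_Zmod x) (isog_setX1 _ _).
exact: isog_trans (cyc_isog_Zmod y) (isog_set1X _ _).
Qed.

Section Main.
Variables (gT : finGroupType) (H : {group gT}) (d : nat) (lam : gT -> gT -> rat).
Hypotheses (cHH : abelian H) (cardH : #|H| = d) (oddd : odd d)
  (hd : forall m : nat, (m %| d)%N -> (m %% 4 != 3)%N)
  (hsb : symmetric_bilinear_QZ H lam) (hnd : nondegenerate_QZ H lam).

Lemma lamQX x n : x \in H -> eqQZ (lam (x ^+ n)%g (x ^+ n)%g) ((n * n)%N%:R * lam x x).
Proof.
move=> Hx; apply: eqQZ_trans (lamXl hsb n Hx (groupX n Hx)) _.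
rewrite natrM -mulrA; apply: eqQZ_muln.
have := lamXr hsb n Hx Hx. done.
Qed.

Lemma pdiv_facts r : prime r -> (r %| d)%N -> odd r /\ (r %% 4 = 1)%N.
Proof.
move=> pr rd; have or := odd_dvd oddd rd; split => //; exact: mod4 or (hd rd).
Qed.

Section Dir1.
Hypothesis L1 : Lambda0 H lam = 1%g.

Lemma iso0 x : x \in H -> eqQZ (lam x x) 0 -> x = 1%g.
Proof.
move=> Hx h; have : x \in Lambda0 H lam by rewrite inE Hx h.
by rewrite L1 => /set1P.
Qed.

Lemma sqf x r : x \in H -> prime r -> ~~ (r ^ 2 %| #[x]%g)%N.
Proof.
move=> Hx pr; apply/negP => /dvdnP [k ek].
have k0 : (0 < k)%N by move: (order_gt0 x); rewrite ek muln_gt0 => /andP [].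
pose m := (k * r)%N.
have mx : (m %| #[x]%g)%N by rewrite ek; apply/dvdnP; exists r; rewrite /m expnS expn1; nia.
have oy : #[x ^+ m]%g = r.
  rewrite orderXdiv // ek /m expnS expn1 mulnA mulKn // muln_gt0 k0 prime_gt0 //.
have : (x ^+ m = 1)%g.
  apply: iso0 (groupX _ Hx) _.
  apply: eqQZ_trans (lamQX m Hx) _.
  have -> : (m * m)%N = (k * #[x]%g)%N by rewrite ek /m expnS expn1; nia.
  rewrite natrM -mulrA.
  have := eqQZ_muln k (lam_ord hsb Hx Hx (expg_order x)); rewrite mulr0 //.
move=> e; move: oy; rewrite e order1 => r1.
by rewrite -r1 in pr.
Qed.

Lemma rankH : (('r(H))%g <= 2)%N.
Proof.
have [r pr ->] := rank_witness H.
rewrite leqNgt; apply/negP => hr.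
have [E] := p_rank_witness r H.
case/pnElemP => sEH abE lE.
have [_ expE] := abelemP pr abE.
have cE : (r ^ 3 <= #|E|)%N.
  by rewrite (card_pgroup (abelem_pgroup abE)) leq_exp2l ?prime_gt1 // lE.
have rd : (r %| d)%N.
  rewrite -cardH; apply: dvdn_trans (cardSg sEH).
  rewrite (card_pgroup (abelem_pgroup abE)) -{1}(expn1 r) dvdn_exp2l // lE.
  by apply: leq_trans hr.
have [or _] := pdiv_facts pr rd.
apply: (no_ternary hsb cHH pr sEH expE or cE).
move=> x Ex h; apply: iso0 (subsetP sEH x Ex) _.
by apply/(Bzero hsb pr sEH expE Ex Ex).
Qed.

Lemma structH : exists x y, (<[x]> \x <[y]> = H)%g /\ (#[y]%g %| #[x]%g)%N.
Proof.
have [b eb ob] := abelian_structure cHH.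
have sb : (size b <= 2)%N by rewrite -(size_map order) ob size_abelian_type // rankH.
have := abelian_type_dvdn_sorted H; rewrite -ob.
case: b eb ob sb => [|x [|y [|z b]]] //= eb _ _ srt.
- exists 1%g, 1%g; rewrite cycle1 dprodg1 order1; split => //.
  by move: eb; rewrite big_nil.
- exists x, 1%g; rewrite cycle1 dprodg1 order1 dvd1n; split => //.
  by rewrite -eb big_cons big_nil dprodg1.
exists x, y; split; first by rewrite -eb !big_cons big_nil dprodg1.
by move: srt => /andP [].
Qed.

Lemma dir1 : exists q' q : nat,
     [/\ prod_distinct_primes_1mod4 q', (q %| q')%N,
         (H \isog [set: (Zmod q' * Zmod q)%type])%g &
         forall p : nat, prime p -> (p %| q)%N ->
           forall P : {group gT}, (P \in 'Syl_p(H))%g ->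
           exists (g1 g2 : gT) (beta : int),
             [/\ (#[g1] = p)%g, (#[g2] = p)%g, (<[g1]> \x <[g2]> = P)%g,
                 (forall x : int, ~~ (p%:Z %| (x ^+ 2 - beta)%R)%Z) &
                 forall e1 e2 : nat,
                   eqQZ (lam (g1 ^+ e1 * g2 ^+ e2)%g (g1 ^+ e1 * g2 ^+ e2)%g)
                        (((e1 ^ 2)%:Z + beta * (e2 ^ 2)%:Z)%:~R / p%:R)%R]].
Proof.
have [x [y [dxy yx]]] := structH.
have [Hx Hy] : x \in H /\ y \in H.
  have [_ /mulG_sub [sx sy] _ _] := dprodP dxy.
  by rewrite -!cycle_subG.
have cH : #|H| = (#[x]%g * #[y]%g)%N by rewrite -(dprod_card dxy).
exists #[x]%g, #[y]%g; split => //.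
- exists (primes #[x]%g); split; [exact: primes_uniq | exact: all_prime_primes | | ].
    apply/allP => r; rewrite mem_primes => /and3P [pr _ rx].
    have rd : (r %| d)%N by rewrite -cardH; exact: dvdn_trans rx (order_dvdG Hx).
    by have [_ ->] := pdiv_facts pr rd.
  by apply: sqf_prod (order_gt0 x) _ => r pr; exact: sqf Hx pr.
- exact: iso_Zmod dxy.
move=> r pr ry P; rewrite inE => sylP.
have rx := dvdn_trans ry yx.
have sPH := pHall_sub sylP.
have cP : #|P| = (r ^ 2)%N.
  rewrite (card_Hall sylP) cH p_part lognM ?order_gt0 // !logn1 ?order_gt0 ?sqf //.
have expP : forall z, z \in P -> (z ^+ r = 1)%g.
  move=> z Pz; have Hz := subsetP sPH z Pz.
  have : (#[z]%g %| r ^ 2)%N by rewrite -cP order_dvdG.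
  case/(dvdn_pfactor _ _ pr) => m m2 ez.
  apply/eqP; rewrite -order_dvdn ez.
  have : m != 2%N by apply: contraNneq (sqf Hz pr) => e; rewrite ez e.
  by move=> m2'; rewrite -{2}(expn1 r) dvdn_exp2l ?prime_gt0 //; lia.
have rd : (r %| d)%N by rewrite -cardH; exact: dvdn_trans ry (order_dvdG Hy).
have [or r4] := pdiv_facts pr rd.
apply: (binary hsb cHH pr sPH expP or r4 cP).
move=> z Pz h; apply: iso0 (subsetP sPH z Pz) _.
by apply/(Bzero hsb pr sPH expP Pz Pz).
Qed.

End Dir1.

Section Dir2.
Variables q' q : nat.
Hypotheses (hq' : prod_distinct_primes_1mod4 q') (hqq : (q %| q')%N)
  (iso : (H \isog [set: (Zmod q' * Zmod q)%type])%g)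
  (hsyl : forall p : nat, prime p -> (p %| q)%N ->
           forall P : {group gT}, (P \in 'Syl_p(H))%g ->
           exists (g1 g2 : gT) (beta : int),
             [/\ (#[g1] = p)%g, (#[g2] = p)%g, (<[g1]> \x <[g2]> = P)%g,
                 (forall x : int, ~~ (p%:Z %| (x ^+ 2 - beta)%R)%Z) &
                 forall e1 e2 : nat,
                   eqQZ (lam (g1 ^+ e1 * g2 ^+ e2)%g (g1 ^+ e1 * g2 ^+ e2)%g)
                        (((e1 ^ 2)%:Z + beta * (e2 ^ 2)%:Z)%:~R / p%:R)%R]).

Lemma no_iso_prime y r : y \in H -> #[y]%g = r -> prime r -> eqQZ (lam y y) 0 -> False.
Proof.
move=> Hy oy pr hy.
have [s [us ps _ eq']] := hq'.
have q'0 : (0 < q')%N by rewrite eq' prod_primes_gt0.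
have q0 : (0 < q)%N by exact: dvdn_gt0 q'0 hqq.
have cH : #|H| = (q' * q)%N.
  rewrite (card_isog iso) cardsT card_prod /Zmod !card_ord !prednK //.
have sqf' : forall r, prime r -> ~~ (r ^ 2 %| q')%N by move=> r' pr'; rewrite eq'; exact: prod_sqf.
have [P sylP] := Sylow_exists r H.
have sPH := pHall_sub sylP.
have nPH : (P <| H)%g by rewrite -sub_abelian_normal.
have memP z : z \in H -> (z \in P) = (r.-elt z)%g by move=> Hz; exact: mem_normal_Hall sylP nPH Hz.
have Py : y \in P by rewrite memP // /p_elt oy pnat_id.
have rH : (r %| #|H|)%N by rewrite -oy order_dvdG.
have rd : (r %| d)%N by rewrite -cardH.
have [or r4] := pdiv_facts pr rd.
case: (boolP (r %| q)%N) => rq.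
- have sylP' : (P \in 'Syl_r(H))%g by rewrite inE.
  have [g1 [g2 [beta [og1 og2 dP nr form]]]] := hsyl pr rq sylP'.
  move: Py; rewrite -(dprodW dP) => /mulsgP [a b /cycleP [i ->] /cycleP [j ->] ey].
  have := form i j; rewrite -ey => hf.
  have h0 : eqQZ (((i ^ 2)%:Z + beta * (j ^ 2)%:Z)%:~R / r%:R) 0 := eqQZ_trans (eqQZ_sym hf) hy.
  move: h0; rewrite /eqQZ subr0 divp_int ?prime_gt0 // -Fp_int0 // intrD intrM -!pmulrn !natrX => /eqP h.
  set I := (i%:R : 'F_r) in h; set J := (j%:R : 'F_r) in h.
  have [ii hi] := sqrtm1 pr r4.
  case: (eqVneq J 0) => J0.
    rewrite J0 (expr2 0) !mulr0 addr0 in h.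
    have I0 : I = 0 by move/eqP: h; rewrite expf_eq0 => /andP [_ /eqP].
    have e1 : (g1 ^+ i = 1)%g.
      by apply/eqP; rewrite -order_dvdn og1 (dvdn_pcharf (pchar_Fp pr)) -/I I0.
    have e2 : (g2 ^+ j = 1)%g.
      by apply/eqP; rewrite -order_dvdn og2 (dvdn_pcharf (pchar_Fp pr)) -/J J0.
    by move: oy; rewrite ey e1 e2 mulg1 order1 => r1; rewrite -r1 in pr.
  apply: (negP (nr (Posz (val (ii * I / J))))).
  rewrite -Fp_int0 // intrB expr2 intrM -pmulrn Fp_natK // -expr2.
  have e : beta%:~R * J ^+ 2 = - I ^+ 2 by apply/eqP; rewrite -addr_eq0 addrC h.
  apply/eqP; apply: (mulIf (expf_neq0 2 J0)); rewrite mul0r mulrBl e.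
  rewrite !exprMn hi; field; exact: J0.
- have nr2 : ~~ (r ^ 2 %| q' * q)%N.
    apply/negP => h; have : (r ^ 2 %| q')%N.
      by rewrite -(Gauss_dvdl _ (_ : coprime (r ^ 2) q)) // coprime_pexpl // prime_coprime.
    by apply/negP; apply: sqf'.
  have cP : #|P| = r.
    rewrite (card_Hall sylP) cH p_part logn1 ?expn1 ?muln_gt0 ?q'0 // -cH //.
  have ePy : (P : {set gT}) = <[y]>%g.
    by apply/eqP; rewrite eq_sym eqEcard cycle_subG Py -orderE oy cP leqnn.
  have y1 : y = 1%g.
    apply: (hnd Hy) => h Hh.
    pose m := (#|H| %/ r)%N.
    have em : #|H| = (m * r)%N by rewrite /m divnK.
    have cop : coprime m r.
      rewrite coprime_sym prime_coprime //; apply/negP => rm.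
      move: nr2; rewrite -cH em expnS expn1 mulnC.
      by rewrite dvdn_mul.
    have Phm : (h ^+ m)%g \in P.
      rewrite memP ?groupX //; apply: pnat_dvd _ (pnat_id pr).
      by rewrite order_dvdn -expgM -em expg_cardG.
    move: Phm; rewrite ePy => /cycleP [k ek].
    have h1 : eqQZ (m%:R * lam y h) 0.
      apply: eqQZ_trans (eqQZ_sym (lamXr hsb m Hh Hy)) _.
      rewrite ek; apply: eqQZ_trans (lamXr hsb k Hy Hy) _.
      by have := eqQZ_muln k hy; rewrite mulr0.
    have h2 : eqQZ (r%:R * lam y h) 0.
      by apply: (lam_ord hsb Hy Hh); rewrite -oy expg_order.
    exact: coprime_QZ cop h1 h2.
  by move: oy; rewrite y1 order1 => r1; rewrite -r1 in pr.
Qed.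

Lemma dir2 : Lambda0 H lam = 1%g.
Proof.
apply/eqP; rewrite eqEsubset; apply/andP; split; last first.
  by apply/subsetP => x /set1P ->; rewrite inE group1 (lam1l hsb (group1 H)).
apply/subsetP => g; rewrite inE => /andP [Hg hg]; rewrite inE.
apply/negPn/negP => g1.
have og : (1 < #[g]%g)%N by rewrite order_gt1.
have pr := pdiv_prime og.
have [k ek] : exists k, #[g]%g = (k * pdiv #[g]%g)%N.
  by exists (#[g]%g %/ pdiv #[g]%g)%N; rewrite divnK // pdiv_dvd.
move: pr ek; set r := pdiv #[g]%g => pr ek; clearbody r.
have k0 : (0 < k)%N by move: (order_gt0 g); rewrite ek muln_gt0 => /andP [].
have oy : #[(g ^+ k)%g]%g = r.
  by rewrite orderXdiv ek ?dvdn_mulr // mulKn.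
apply: (no_iso_prime (groupX k Hg) oy pr).
apply: eqQZ_trans (lamQX k Hg) _.
by have := eqQZ_muln (k * k)%N hg; rewrite mulr0.
Qed.

End Dir2.

End Main.

Theorem mainTheorem3 (gT : finGroupType) (H : {group gT}) (d : nat)
  (lam : gT -> gT -> rat) :
  abelian H -> #|H| = d -> odd d ->
  (forall m : nat, (m %| d)%N -> (m %% 4 != 3)%N) ->
  symmetric_bilinear_QZ H lam -> nondegenerate_QZ H lam ->
  (Lambda0 H lam = 1%g <->
   exists q' q : nat,
     [/\ prod_distinct_primes_1mod4 q', (q %| q')%N,
         (H \isog [set: (Zmod q' * Zmod q)%type])%g &
         forall p : nat, prime p -> (p %| q)%N ->
           forall P : {group gT}, (P \in 'Syl_p(H))%g ->
           exists (g1 g2 : gT) (beta : int),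
             [/\ (#[g1] = p)%g, (#[g2] = p)%g, (<[g1]> \x <[g2]> = P)%g,
                 (forall x : int, ~~ (p%:Z %| (x ^+ 2 - beta)%R)%Z) &
                 forall e1 e2 : nat,
                   eqQZ (lam (g1 ^+ e1 * g2 ^+ e2)%g (g1 ^+ e1 * g2 ^+ e2)%g)
                        (((e1 ^ 2)%:Z + beta * (e2 ^ 2)%:Z)%:~R / p%:R)%R]]).
Proof.
move=> cHH cH od hd hsb hnd; split.
  by move=> L1; exact: dir1 cHH cH od hd hsb L1.
case=> q' [q [hq' hqq iso hsyl]].
have := dir2 cHH cH od hd hsb hnd hq' hqq iso. apply. exact hsyl.
Qed.
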